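(* Let $(G,\rho)$ be a reversible random network and let $\zeta>0$. Suppose that for every $\delta>0$, almost surely, for all sufficiently large $R$, \[ \max\{\mathsf R^G_{\mathrm{eff}}(\rho\leftrightarrow x):x\in B^G(\rho,R)\}\le R^{\zeta+\delta} \quad\text{and}\quad \mathsf R^G_{\mathrm{eff}}(\rho\leftrightarrow\bar B^G(\rho,R))\ge R^{\zeta-\delta}. \] Then $\tilde\zeta=\tilde\zeta_0=\zeta$.
   Context: A random rooted network $(G,\rho,c^G,\xi)$: random locally finite connected graph $G$ (self-loops allowed), root $\rho$, conductances $c^G:E(G)\to[0,\infty)$, marking $\xi$. $c^G_u=\sum_{v:\{u,v\}\in E(G)}c^G(\{u,v\})$; random walk $X_0=\rho$, $\Pr[X_{n+1}=v\mid X_n=u]=c^G(\{u,v\})/c^G_u$. Reversible: a.s. $c^G_\rho>0$ and $(G,X_0,X_1,c^G,\xi)\overset d=(G,X_1,X_0,c^G,\xi)$. $d^G$ graph distance, $B^G(x,R)=\{y:d^G(x,y)\le R\}$, $\bar B^G(x,R)=V(G)\setminus B^G(x,R)$, $\mathsf R^G_{\mathrm{eff}}$ effective resistance in the network $(G,c^G)$. $\tilde\zeta$ is the supremum of the values $\zeta'$ such that for every $\delta>0$, a.s. for all but finitely many $R\in\mathbb N$, $\mathsf R^G_{\mathrm{eff}}(B^G(\rho,R^{1-\delta})\leftrightarrow\bar B^G(\rho,R))\ge R^{\zeta'-\delta}$; $\tilde\zeta_0$ is the infimum of the values $\zeta'$ such that for every $\delta>0$, a.s. for all but finitely many $R\in\mathbb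 N$, $\mathsf R^G_{\mathrm{eff}}(\rho\leftrightarrow\bar B^G(\rho,R))\le R^{\zeta'+\delta}$. *)

(* Defs.v *)
From HB Require Import structures.
From mathcomp Require Import all_boot all_order all_algebra.
From mathcomp Require Import all_classical all_reals all_analysis measurable_realfun.
Set Implicit Arguments. Unset Strict Implicit. Unset Printing Implicit Defensive.
Import Order.TTheory GRing.Theory Num.Theory.
Import numFieldNormedType.Exports.
Local Open Scope classical_set_scope.
Local Open Scope ring_scope.

(* A (labelled) network on the vertex set nat (an infinite connected locally
   finite graph is countably infinite, so its vertices can be labelled by nat).
   nadj : edge relation (self-loops allowed), ncond : conductances,
   nmarkv / nmarke : vertex / (oriented) edge marks. *)
Record net (R : realType) (Xi : Type) := Net {
  nadj : nat -> nat -> bool;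
  ncond : nat -> nat -> R;
  nmarkv : nat -> Xi;
  nmarke : nat -> nat -> Xi }.

Section Networks.
Context {R : realType} {Xi : Type}.
Implicit Types N : net R Xi.

Fixpoint walkn N (n : nat) (x y : nat) : Prop :=
  match n with
  | 0 => x = y
  | n'.+1 => exists z, walkn N n' x z /\ nadj N z y
  end.

Definition is_network N : Prop :=
  (forall u v, nadj N u v = nadj N v u) /\
  (forall u v, ncond N u v = ncond N v u) /\
  (forall u v, 0 <= ncond N u v) /\
  (forall u v, ~~ nadj N u v -> ncond N u v = 0) /\
  (forall u, finite_set [set v | nadj N u v]) /\
  (forall u v, exists n, walkn N n u v).

Definition gball N (x : nat) (r : R) : set nat :=
  [set y | exists n : nat, (n%:R <= r) /\ walkn N n x y].

Definition csum N (u : nat) : R :=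
  fine (\esum_(v in [set v | nadj N u v]) (ncond N u v)%:E).

Definition trans N (u v : nat) : R := ncond N u v / csum N u.

Definition energy N (f : nat -> R) : \bar R :=
  \esum_(p in [set p : nat * nat | (p.1 <= p.2)%N])
     (ncond N p.1 p.2 * (f p.1 - f p.2) ^+ 2)%:E.

(* effective resistance R_eff(A <-> Z) = 1 / inf {energy f : f = 1 on A, f = 0 on Z}
   (1/+oo = 0, 1/0 = +oo) *)
Definition Reff N (A Z : set nat) : \bar R :=
  let m := ereal_inf [set energy N f | f in
              [set f : nat -> R | (forall a, A a -> f a = 1) /\
                                  (forall z, Z z -> f z = 0)]] in
  if m == +oo%E then 0%E
  else if m == 0%E then +oo%E
  else ((fine m)^-1)%:E.

(* relabelling isomorphism of doubly rooted networks (N,x,y) ~ (N',x',y'),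
   ignoring the (meaningless) conductances/edge marks off edges *)
Definition net_iso N N' (x y x' y' : nat) : Prop :=
  exists s : nat -> nat, bijective s /\
    (forall u v, nadj N' u v = nadj N (s u) (s v)) /\
    (forall u v, nadj N' u v -> ncond N' u v = ncond N (s u) (s v)) /\
    (forall u, nmarkv N' u = nmarkv N (s u)) /\
    (forall u v, nadj N' u v -> nmarke N' u v = nmarke N (s u) (s v)) /\
    s x' = x /\ s y' = y.

End Networks.

Section RandomNetworks.
Context {R : realType} {dx : measure_display} {Xi : measurableType dx}.

Definition net_cyl : set (set (net R Xi * nat * nat)) := fun A =>
  (exists u v, A = [set t | nadj t.1.1 u v]) \/
  (exists u v (B : set R), measurable B /\ A = [set t | B (ncond t.1.1 u v)]) \/
  (exists u (B : set Xi), measurable B /\ A = [set t | B (nmarkv t.1.1 u)]) \/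
  (exists u v (B : set Xi), measurable B /\ A = [set t | B (nmarke t.1.1 u v)]) \/
  (exists k, A = [set t | t.1.2 = k]) \/
  (exists k, A = [set t | t.2 = k]).

(* nonnegative measurable isomorphism-invariant functionals of doubly rooted
   networks: test functions for equality in law of (G,X0,X1,c,xi) *)
Definition test_fun (F : net R Xi * nat * nat -> \bar R) : Prop :=
  (forall t, (0 <= F t)%E) /\
  (forall B : set (\bar R), measurable B -> <<s net_cyl >> (F @^-1` B)) /\
  (forall N N' x y x' y', net_iso N N' x y x' y' -> F (N', x', y') = F (N, x, y)).

Context {d : measure_display} {Omega : measurableType d}.

Definition measurable_net (N : Omega -> net R Xi) (rho : Omega -> nat) : Prop :=
  (forall u v, measurable [set w | nadj (N w) u v]) /\
  (forall u v, measurable_fun setT (fun w => ncond (N w) u v)) /\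
  (forall u, measurable_fun setT (fun w => nmarkv (N w) u)) /\
  (forall u v, measurable_fun setT (fun w => nmarke (N w) u v)) /\
  (forall k, measurable [set w | rho w = k]).

(* reversibility: a.s. c_rho > 0, and (G,X0,X1,c,xi) =d (G,X1,X0,c,xi) *)
Definition reversible (P : probability Omega R)
    (N : Omega -> net R Xi) (rho : Omega -> nat) : Prop :=
  {ae P, forall w, 0 < csum (N w) (rho w)} /\
  forall F, test_fun F ->
    (\int[P]_w (\esum_(v in [set v | nadj (N w) (rho w) v])
                  ((trans (N w) (rho w) v)%:E * F (N w, rho w, v))))%E =
    (\int[P]_w (\esum_(v in [set v | nadj (N w) (rho w) v])
                  ((trans (N w) (rho w) v)%:E * F (N w, v, rho w))))%E.

Definition zeta_tilde (P : probability Omega R)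
    (N : Omega -> net R Xi) (rho : Omega -> nat) : \bar R :=
  ereal_sup [set z%:E | z in [set z : R | forall delta : R, 0 < delta ->
    {ae P, forall w, exists R0 : nat, forall n : nat, (R0 <= n)%N ->
      ((n%:R `^ (z - delta))%:E <=
       Reff (N w) (gball (N w) (rho w) (n%:R `^ (1 - delta)))
                  (~` gball (N w) (rho w) n%:R))%E}]].

Definition zeta_tilde0 (P : probability Omega R)
    (N : Omega -> net R Xi) (rho : Omega -> nat) : \bar R :=
  ereal_inf [set z%:E | z in [set z : R | forall delta : R, 0 < delta ->
    {ae P, forall w, exists R0 : nat, forall n : nat, (R0 <= n)%N ->
      (Reff (N w) [set rho w] (~` gball (N w) (rho w) n%:R) <=
       (n%:R `^ (z + delta))%:E)%E}]].

End RandomNetworks.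

(* Main.v *)
Require Import Defs.
From HB Require Import structures.
From mathcomp Require Import all_boot all_order all_algebra.
From mathcomp Require Import all_classical all_reals all_analysis measurable_realfun.
From mathcomp Require Import ring lra.
Import Order.TTheory GRing.Theory Num.Theory.
Import numFieldNormedType.Exports.
Set Implicit Arguments. Unset Strict Implicit. Unset Printing Implicit Defensive.
Local Open Scope classical_set_scope.
Local Open Scope ring_scope.

Definition hfun (R : realType) (m : \bar R) : \bar R :=
  if m == +oo%E then 0%E else if m == 0%E then +oo%E else ((fine m)^-1)%:E.

Definition feas (R : realType) (A Z : set nat) :=
  [set f : nat -> R | (forall a, A a -> f a = 1) /\ (forall z, Z z -> f z = 0)].

Definition minf (R : realType) (Xi : Type) (N : net R Xi) (A Z : set nat) :=
  ereal_inf [set energy N f | f in @feas R A Z].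

Lemma ReffE (R : realType) (Xi : Type) (N : net R Xi) (A Z : set nat) :
  Reff N A Z = hfun (minf N A Z).
Proof. by []. Qed.

Lemma hfun_ge0 (R : realType) (m : \bar R) : (0 <= m)%E -> (0 <= hfun m)%E.
Proof.
move=> m0; rewrite /hfun; case: ifP => // _; case: ifP => // _.
by rewrite lee_fin invr_ge0 fine_ge0.
Qed.

Lemma hmono (R : realType) (m1 m2 : \bar R) :
  (0 <= m1)%E -> (m1 <= m2)%E -> (hfun m2 <= hfun m1)%E.
Proof.
move=> m10 m12.
case: m2 m12 => [r2| |] m12; [|by rewrite /hfun eqxx; apply: hfun_ge0|by move: (le_trans m10 m12)].
case: m1 m10 m12 => [r1| |] m10 m12 //.
rewrite lee_fin in m10 m12.
rewrite /hfun /= !eqe.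
case: (eqVneq r1 0) => [r1eq|r10]; first by rewrite leey.
have r1p : 0 < r1 by rewrite lt_def r10.
have r2p : 0 < r2 := lt_le_trans r1p m12.
rewrite gt_eqF // lee_fin.
by rewrite lef_pV2.
Qed.

Lemma energy_ge0 (R : realType) (Xi : Type) (N : net R Xi) f :
  is_network N -> (0 <= energy N f)%E.
Proof.
move=> [_ [_ [c0 _]]]; apply: esum_ge0 => p _.
by rewrite lee_fin mulr_ge0 // sqr_ge0.
Qed.

Lemma minf_ge0 (R : realType) (Xi : Type) (N : net R Xi) A Z :
  is_network N -> (0 <= minf N A Z)%E.
Proof.
move=> Hn; apply/ereal_infP => _ [f _ <-]; exact: energy_ge0.
Qed.

Lemma Reff_ge0 (R : realType) (Xi : Type) (N : net R Xi) A Z :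
  is_network N -> (0 <= Reff N A Z)%E.
Proof. by move=> Hn; rewrite ReffE; apply/hfun_ge0/minf_ge0. Qed.

Lemma Reff_anti (R : realType) (Xi : Type) (N : net R Xi) A Z A' Z' :
  is_network N -> A' `<=` A -> Z' `<=` Z -> (Reff N A Z <= Reff N A' Z')%E.
Proof.
move=> Hn AA ZZ; rewrite !ReffE; apply: hmono; first exact: minf_ge0.
apply: ereal_inf_le_tmp => _ [f [fA fZ] <-]; exists f => //; split.
- by move=> a /AA; apply: fA.
- by move=> z /ZZ; apply: fZ.
Qed.

Lemma energy_le (R : realType) (Xi : Type) (N : net R Xi) f g (c : R) :
  is_network N -> 0 <= c ->
  (forall u v, (f u - f v) ^+ 2 <= c * (g u - g v) ^+ 2) ->
  (energy N f <= c%:E * energy N g)%E.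
Proof.
move=> [_ [_ [c0 _]]] cge fg.
apply: ge_ereal_sup => _ [A [finA AI] <-].
rewrite fsumEFin //.
apply: (@le_trans _ _ (c%:E * (\sum_(i \in A) (ncond N i.1 i.2 * (g i.1 - g i.2) ^+ 2))%:E)%E).
  rewrite -EFinM lee_fin mulr_fsumr.
  rewrite !fsbig_finite //; apply: ler_sum => i _.
  by rewrite [X in _ <= X]mulrCA; apply: ler_wpM2l; [exact: c0|exact: fg].
apply: lee_wpmul2l; first by rewrite lee_fin.
rewrite -fsumEFin //.
by apply: ereal_sup_ubound; exists A.
Qed.

Lemma RlowE (R : realType) (Xi : Type) (N : net R Xi) A Z f (e : R) :
  is_network N -> feas A Z f -> (energy N f <= e%:E)%E -> 0 < e ->
  ((e^-1)%:E <= Reff N A Z)%E.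
Proof.
move=> Hn Ff fe e0; rewrite ReffE.
have -> : (e^-1)%:E = hfun e%:E.
  by rewrite /hfun /= eqe gt_eqF.
apply: hmono; first exact: minf_ge0.
by apply: ge_ereal_inf; exists (energy N f) => //; exists f.
Qed.

Lemma RupE (R : realType) (Xi : Type) (N : net R Xi) A Z (s e : R) :
  is_network N -> 0 < s -> (s%:E <= Reff N A Z)%E -> s^-1 < e ->
  exists f, feas A Z f /\ (energy N f < e%:E)%E.
Proof.
move=> Hn s0 sR se.
have e0 : 0 < e by apply: lt_trans se; rewrite invr_gt0.
suff : (minf N A Z < e%:E)%E.
  by move=> /ereal_inf_lt [_ [f Ff <-] fe]; exists f.
move: sR; rewrite ReffE /hfun.
have := minf_ge0 A Z Hn.
case: (minf N A Z) => [m| |] m0 //=.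
- rewrite !eqe; case: eqP => [->|/eqP m0']; first by rewrite lte_fin.
  rewrite lee_fin in m0.
  have mp : 0 < m by rewrite lt_def m0' m0.
  rewrite lee_fin => sm.
  rewrite lte_fin; apply: le_lt_trans se.
  by rewrite -(invrK m) lef_pV2 // ?posrE ?invr_gt0.
- by rewrite ?eqxx /= lee_fin leNgt s0.
Qed.

Lemma KI (R : realType) (Xi : Type) (N : net R Xi) (a x : nat) (h : nat -> R) (r e : R) :
  is_network N -> (Reff N [set a] [set x] <= r%:E)%E -> (energy N h <= e%:E)%E -> 0 < e ->
  (h a - h x) ^+ 2 <= r * e.
Proof.
move=> Hn Rr he e0.
have r0 : 0 <= r by rewrite -lee_fin; apply: le_trans Rr; apply: Reff_ge0.
set d := h a - h x.
have [d0|dn0] := eqVneq d 0.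
  by rewrite d0 expr0n /= mulr_ge0 // ltW.
pose f := fun u => (h u - h x) / d.
have Ff : feas [set a] [set x] f.
  split => [b ->|z ->]; rewrite /f; first by rewrite divff.
  by rewrite subrr mul0r.
have d2 : 0 < d ^+ 2 by rewrite lt_def sqrf_eq0 dn0 sqr_ge0.
have Ef : (energy N f <= ((d ^+ 2)^-1 * e)%:E)%E.
  apply: (le_trans (energy_le (g := h) (c := (d ^+ 2)^-1) _ _ _)) => //.
  - by rewrite invr_ge0 ltW.
  - move=> u v; rewrite /f le_eqVlt; apply/orP; left; apply/eqP.
    by field.
  - by rewrite EFinM lee_wpmul2l // lee_fin invr_ge0 ltW.
have := RlowE Hn Ff Ef (mulr_gt0 (_ : 0 < (d ^+ 2)^-1) e0).
rewrite invr_gt0 => /(_ d2).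
rewrite invfM invrK.
move=> /le_trans /(_ Rr); rewrite lee_fin.
by rewrite ler_pdivrMr.
Qed.

Definition clamp (R : realType) (t : R) : R :=
  if t <= 0 then 0 else if 1 <= t then 1 else t.

Lemma clamp_lip (R : realType) (a b : R) : (clamp a - clamp b) ^+ 2 <= (a - b) ^+ 2.
Proof.
have key : forall x y : R, x <= y -> 0 <= clamp y - clamp x <= y - x.
  move=> x y xy; rewrite /clamp.
  case: (lerP x 0) => hx; case: (lerP 1 x) => hx1;
    case: (lerP y 0) => hy; case: (lerP 1 y) => hy1; apply/andP; split; lra.
case: (lerP a b) => h; [have /andP[h1 h2] := key a b h | have /andP[h1 h2] := key b a (ltW h)]; nra.
Qed.

Lemma L2 (R : realType) (Xi : Type) (N : net R Xi) (a : nat) A Z (r s : R) :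
  is_network N -> 0 < s -> 8 * r <= s -> (s%:E <= Reff N [set a] Z)%E ->
  (forall x, A x -> (Reff N [set a] [set x] <= r%:E)%E) ->
  ((s / 8)%:E <= Reff N A Z)%E.
Proof.
move=> Hn s0 rs sR Ar.
have [g [[ga gZ] Eg]] : exists g, feas [set a] Z g /\ (energy N g < (2 / s)%:E)%E.
  apply: (RupE Hn s0 sR).
  by rewrite ltr_pdivlMr // mulVf ?gt_eqF // ltr1n.
have s2 : 0 < 2 / s by rewrite divr_gt0.
have gA : forall x, A x -> 1 / 2 <= g x.
  move=> x Ax.
  have := KI Hn (Ar x Ax) (ltW Eg) s2.
  rewrite ga //.
  have : r * (2 / s) <= 1 / 4.
    by rewrite mulrA ler_pdivrMr //; lra.
  by move=> h1 h2; nra.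
pose f := fun u => clamp (2 * g u).
have Ff : feas A Z f.
  split => [x Ax|z Zz]; rewrite /f /clamp.
  - have := gA x Ax => h.
    by rewrite ifF ?ifT //; [lra | apply/negbTE; rewrite -ltNge; lra].
  - by rewrite gZ // mulr0 lexx.
have Ef : (energy N f <= (8 / s)%:E)%E.
  apply: (le_trans (energy_le (g := g) (c := 4) _ _ _)) => //.
  - move=> u v; rewrite /f; apply: (le_trans (clamp_lip _ _)).
    by rewrite le_eqVlt; apply/orP; left; apply/eqP; ring.
  - apply: (le_trans (lee_wpmul2l _ (ltW Eg))); first by rewrite lee_fin.
    by rewrite -EFinM lee_fin le_eqVlt; apply/orP; left; apply/eqP; field; rewrite gt_eqF.
have := RlowE Hn Ff Ef (divr_gt0 _ s0).
by rewrite invf_div; apply.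
Qed.

Lemma walk_finite (R : realType) (Xi : Type) (N : net R Xi) k x :
  is_network N -> finite_set [set y | walkn N k x y].
Proof.
move=> [_ [_ [_ [_ [Hf _]]]]]; elim: k => [|k IH] /=.
  apply: (@sub_finite_set _ _ [set x]); last exact: finite_set1.
  by move=> y /= ->.
apply: (@sub_finite_set _ _ (\bigcup_(z in [set z | walkn N k x z]) [set y | nadj N z y])).
  by move=> y [z [wz zy]]; exists z.
by apply: bigcup_finite => // z _; apply: Hf.
Qed.

Lemma ball_finite (R : realType) (Xi : Type) (N : net R Xi) x n :
  is_network N -> finite_set (gball N x n%:R).
Proof.
move=> Hn.
apply: (@sub_finite_set _ _ (\bigcup_(k in `I_n.+1) [set y | walkn N k x y])).
  move=> y [k [kn wk]]; exists k => //=.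
  by rewrite ltnS -(ler_nat R).
by apply: bigcup_finite; [exact: finite_II | move=> k _; exact: walk_finite].
Qed.

Lemma in_ball0 (R : realType) (Xi : Type) (N : net R Xi) x (r : R) :
  0 <= r -> gball N x r x.
Proof. by move=> r0; exists 0%N. Qed.

Lemma boundary (R : realType) (Xi : Type) (N : net R Xi) x n :
  is_network N -> exists y, ~ gball N x n%:R y /\ gball N x n.+1%:R y.
Proof.
move=> Hn.
have [y ny] : exists y, ~ gball N x n%:R y.
  have [//|H] := pselect (exists y, ~ gball N x n%:R y).
  exfalso; apply: infinite_nat.
  apply: (@sub_finite_set _ _ (gball N x n%:R)); last exact: ball_finite.
  by move=> y _; apply: contrapT => ny; apply: H; exists y.
have [_ [_ [_ [_ [_ Hc]]]]] := Hn.
have [m wm] := Hc x y.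
elim: m y wm ny => [|m IH] y /= wm ny.
  by exfalso; apply: ny; rewrite -wm; exists 0%N.
have [z [wz zy]] := wm.
have [zin|zout] := pselect (gball N x n%:R z); last exact: IH wz zout.
exists y; split => //.
have [k [kn wk]] := zin.
exists k.+1; split; last by exists z.
by rewrite -natr1 -[n.+1]addn1 natrD lerD2r.
Qed.

Definition ev (P : nat -> Prop) := exists N0, forall n, (N0 <= n)%N -> P n.

Lemma ev_and (P Q : nat -> Prop) : ev P -> ev Q -> ev (fun n => P n /\ Q n).
Proof.
move=> [a Ha] [b Hb]; exists (maxn a b) => n; rewrite geq_max => /andP[na nb].
by split; [apply: Ha | apply: Hb].
Qed.

Lemma ev_ge k : ev (fun n => (k <= n)%N).
Proof. by exists k. Qed.

Lemma ev_impl (P Q : nat -> Prop) : (forall n, P n -> Q n) -> ev P -> ev Q.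
Proof. by move=> PQ [a Ha]; exists a => n /Ha /PQ. Qed.

Lemma AS1 (R : realType) (c M : R) : 0 < c -> ev (fun n => M <= n%:R `^ c).
Proof.
move=> c0.
set t := (Num.max M 1) `^ (c^-1).
have [k tk] : exists k : nat, t < k%:R by exists (Num.Def.trunc t).+1; exact: truncnS_gt.
exists k => n kn.
have m0 : 0 <= Num.max M 1 by rewrite le_max ler01 orbT.
have e1 : t `^ c = Num.max M 1 by rewrite /t -powRrM mulVf ?gt_eqF // powRr1.
apply: (le_trans (_ : M <= Num.max M 1)); first by rewrite le_max lexx.
rewrite -e1.
have tn : t <= n%:R by apply: (le_trans (ltW tk)); rewrite ler_nat.
by apply: (ge0_ler_powR (ltW c0)) => //; rewrite nnegrE ?powR_ge0 ?ler0n.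
Qed.

Lemma AS2 (R : realType) (a b K : R) : a < b -> ev (fun n => K * n%:R `^ a <= n%:R `^ b).
Proof.
move=> ab.
apply: ev_impl (ev_and (AS1 K (_ : 0 < b - a)) (ev_ge 1)); last by rewrite subr_gt0.
move=> n [Kn n1].
have -> : n%:R `^ b = n%:R `^ (b - a) * n%:R `^ a.
  rewrite -powRD ?subrK //; apply/implyP => _.
  by rewrite pnatr_eq0 -lt0n.
by apply: ler_wpM2r => //; apply: powR_ge0.
Qed.

Lemma AS3 (R : realType) (p q : R) : 0 <= p -> p < q ->
  ev (fun n => n.+1%:R `^ p <= n%:R `^ q).
Proof.
move=> p0 pq.
apply: ev_impl (ev_and (AS2 (2 `^ p) pq) (ev_ge 1)).
move=> n [h n1].
apply: le_trans h.
rewrite -powRM ?ler0n //.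
apply: (ge0_ler_powR p0); rewrite ?nnegrE ?ler0n ?mulr_ge0 ?ler0n //.
have : (1 <= n%:R :> R) by rewrite ler1n.
by rewrite -natr1; lra.
Qed.

Lemma ev_ex (P : nat -> Prop) : ev P -> exists n, P n.
Proof. by move=> [a Ha]; exists a; apply: Ha. Qed.

Theorem theorem4p7 (R : realType) (d : measure_display) (Omega : measurableType d)
  (P : probability Omega R) (dx : measure_display) (Xi : measurableType dx)
  (N : Omega -> net R Xi) (rho : Omega -> nat) (zeta : R) :
  (forall w, is_network (N w)) ->
  measurable_net N rho ->
  reversible P N rho ->
  0 < zeta ->
  (forall delta : R, 0 < delta ->
    {ae P, forall w, exists R0 : nat, forall n : nat, (R0 <= n)%N ->
      (forall x, gball (N w) (rho w) n%:R x ->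
         (Reff (N w) [set rho w] [set x] <= (n%:R `^ (zeta + delta))%:E)%E) /\
      ((n%:R `^ (zeta - delta))%:E <=
         Reff (N w) [set rho w] (~` gball (N w) (rho w) n%:R))%E}) ->
  zeta_tilde P N rho = zeta%:E /\ zeta_tilde0 P N rho = zeta%:E.
Proof.
move=> Hnet _ _ z0 H.
have P0 : (0 < P setT)%E by rewrite probability_setT lte01.
have PF : ProperFilter (almost_everywhere P) := ae_properfilter_algebraOfSetsType P0.
have HU : forall δ, 0 < δ -> {ae P, forall w, ev (fun n =>
    (Reff (N w) [set rho w] (~` gball (N w) (rho w) n%:R) <= (n%:R `^ (zeta + δ))%:E)%E)}.
  move=> δ δ0.
  have δ2 : 0 < δ / 2 by rewrite divr_gt0.
  apply: filterS (H _ δ2) => w [R0 HR0].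
  have pq : zeta + δ / 2 < zeta + δ by rewrite ltrD2l ltr_pdivrMr //; lra.
  apply: ev_impl (ev_and (AS3 (_ : 0 <= zeta + δ / 2) pq) (ev_ge R0)); last lra.
  move=> n [h Rn].
  have [y [ny iny]] := boundary (rho w) n (Hnet w).
  apply: (le_trans (Reff_anti (A' := [set rho w]) (Z' := [set y]) (Hnet w) _ _)) => //.
    by move=> u ->.
  apply: (le_trans ((HR0 n.+1 (leqW Rn)).1 y iny)).
  by rewrite lee_fin.
split; last first.
  apply/eqP; rewrite eq_le; apply/andP; split.
    apply: ge_ereal_inf; exists zeta%:E => //; exists zeta => //.
  rewrite /zeta_tilde0; apply/ereal_infP => _ [z Hz <-]; rewrite lee_fin leNgt; apply/negP => zz.
  pose δ := (zeta - z) / 3.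
  have δ0 : 0 < δ by rewrite divr_gt0 // subr_gt0.
  have δe : 3 * δ = zeta - z by rewrite /δ mulrC divfK // pnatr_eq0.
  have [w [[R1 h1] [R2 h2]]] := filter_ex (filterI (Hz δ δ0) (H δ δ0)).
  have ab : z + δ < zeta - δ by lra.
  have [n [[[e1 [_ e2]] e3] e4]] := ev_ex (ev_and (ev_and (ev_and
     (ex_intro _ R1 h1 : ev _) (ex_intro _ R2 h2 : ev _)) (AS2 2 ab)) (ev_ge 1)).
  have := le_trans e2 e1; rewrite lee_fin => h.
  have : 0 < n%:R `^ (z + δ) by apply: powR_gt0; rewrite ltr0n.
  lra.
apply/eqP; rewrite eq_le; apply/andP; split.
  rewrite /zeta_tilde; apply/ereal_supP => _ [z Hz <-]; rewrite lee_fin leNgt; apply/negP => zz.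
  pose δ := (z - zeta) / 3.
  have δ0 : 0 < δ by rewrite divr_gt0 // subr_gt0.
  have δe : 3 * δ = z - zeta by rewrite /δ mulrC divfK // pnatr_eq0.
  have [w [[R1 h1] [R2 h2]]] := filter_ex (filterI (Hz δ δ0) (HU δ δ0)).
  have ab : zeta + δ < z - δ by lra.
  have [n [[[e1 e2] e3] e4]] := ev_ex (ev_and (ev_and (ev_and
     (ex_intro _ R1 h1 : ev _) (ex_intro _ R2 h2 : ev _)) (AS2 2 ab)) (ev_ge 1)).
  have e5 := Reff_anti (A := gball (N w) (rho w) (n%:R `^ (1 - δ))) (A' := [set rho w])
     (Z := ~` gball (N w) (rho w) n%:R) (Z' := ~` gball (N w) (rho w) n%:R) (Hnet w)
     (fun u (hu : [set rho w] u) => eq_ind_r _ (in_ball0 _ _ (powR_ge0 _ _)) hu) (fun u hu => hu).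
  have := le_trans e1 (le_trans e5 e2); rewrite lee_fin => h.
  have : 0 < n%:R `^ (zeta + δ) by apply: powR_gt0; rewrite ltr0n.
  lra.
rewrite /zeta_tilde; apply: ereal_sup_ubound; exists zeta => //.
move=> δ δ0.
pose ε := Num.min (Num.min (δ / 2) (zeta / 2)) (δ * zeta / 4).
have ε0 : 0 < ε by rewrite !lt_min !divr_gt0 ?mulr_gt0.
have ε1 : ε <= δ / 2 by rewrite /ε !ge_min lexx.
have ε2 : ε <= zeta / 2 by rewrite /ε !ge_min lexx orbT.
have ε3 : ε <= δ * zeta / 4 by rewrite /ε ge_min lexx orbT.
have δε : 0 < δ * ε by rewrite mulr_gt0.
have δζ : 0 < δ * zeta by rewrite mulr_gt0.
pose e1 := (1 - δ) * (zeta + ε).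
have e1lt : e1 < zeta - ε by rewrite /e1; nra.
apply: filterS (H ε ε0) => w [R0 HR0].
pose C := R0%:R `^ (zeta + ε).
have C0 : 0 <= C by apply: powR_ge0.
have zε : 0 < zeta - ε by lra.
have δε' : zeta - δ < zeta - ε by lra.
apply: ev_impl (ev_and (AS2 16 e1lt) (ev_and (AS1 (16 * C) zε)
  (ev_and (AS2 8 δε') (ev_and (ev_ge R0) (ev_ge 1))))).
move=> n [i1 [i2 [i3 [i4 i5]]]].
have sR := (HR0 n i4).2.
have Ar : forall x, gball (N w) (rho w) (n%:R `^ (1 - δ)) x ->
    (Reff (N w) [set rho w] [set x] <= (n%:R `^ e1 + C)%:E)%E.
  move=> x [k [kn wk]].
  pose m := maxn k R0.
  have xm : gball (N w) (rho w) m%:R x by exists k; split => //; rewrite ler_nat leq_maxl.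
  apply: (le_trans ((HR0 m (leq_maxr k R0)).1 x xm)); rewrite lee_fin.
  have pe : 0 <= n%:R `^ e1 by apply: powR_ge0.
  case: (leqP k R0) => kR.
    rewrite /m (maxn_idPr kR) -/C; lra.
  rewrite /m (maxn_idPl (ltnW kR)).
  have : k%:R `^ (zeta + ε) <= n%:R `^ e1.
    rewrite /e1 powRrM.
    apply: (ge0_ler_powR (_ : 0 <= zeta + ε)); rewrite ?nnegrE ?ler0n ?powR_ge0 //.
    lra.
  lra.
have s0 : 0 < n%:R `^ (zeta - ε) by apply: powR_gt0; rewrite ltr0n.
have rs : 8 * (n%:R `^ e1 + C) <= n%:R `^ (zeta - ε) by lra.
have r0 : 0 <= n%:R `^ e1 + C by have := powR_ge0 n%:R e1; lra.
apply: le_trans (L2 (Hnet w) s0 rs sR Ar).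
rewrite lee_fin; lra.
Qed.
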